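(* Let $\mathcal O$ be a set of operations with $\emptyset \neq \mathcal O \subseteq \{\cup,\cap,\overline{\phantom{c}},+,/\}$ and let $C$ be an $\mathcal O$-circuit. Then there exists a natural number $n \le 2^{|C|}+1$ such that for every natural number $z \ge n$ we have $z \in I(C)$ if and only if $n \in I(C)$.
   Context: Natural numbers include $0$. For $A,B\subseteq\mathbb N$: $A\cup B$, $A\cap B$ are the usual operations, $\overline{A}=\mathbb N\setminus A$, $A+B=\{a+b: a\in A, b\in B\}$, $A\times B=\{a\cdot b: a\in A, b\in B\}$, and $A/B=\{c\in\mathbb N:\exists a\in A\ \exists b\in B\setminus\{0\}: a=c\cdot b\}$ (exact integer division without remainder or rounding). For $\emptyset\ne\mathcal O\subseteq\{\cup,\cap,\overline{\phantom{c}},+,\times,/\}$, an $\mathcal O$-circuit $C=(V,E,g_C,\alpha)$ is a finite acyclic directed multigraph with gate set $V\subseteq\mathbb N$, every gate having indegree $0$, $1$ or $2$, a designated output gate $g_C\in V$, and a labeling $\alpha$: gates of indegree $0$ (input gates) are labeled by natural numbers, gates of indegree $1$ are labeled $\overline{\phantom{c}}$ (allowed only if $\overline{\phantom{c}}\in\mathcal O$), and gates of indegree $2$ are labeled by an operation in $\mathcal O\setminus\{\overline{\phantom{c}}\}$. The result set $I(g)\subseteq\mathbb N$ is defined inductively: $I(g)=\{\alpha(g)\}$ for an input gate; $I(g)=\mathbb N\setminus I(p)$ for a complement gate with predecessor $p$; $I(g)=I(g_1)\,\sigma\,I(g_2)$ for a gate labeled $\sigma$ with predecessors $g_1\le g_2$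 (a double edge from one gate gives $g_1=g_2$). $I(C)=I(g_C)$. A circuit is encoded as a bit string listing its gates in reverse topological order, each gate as the triple (gate name, label, list of predecessors), with all numbers (including input labels) in binary; $|C|$ denotes the length of this encoding. *)

(* Defs.v *)
From mathcomp Require Import all_boot.
Set Implicit Arguments. Unset Strict Implicit. Unset Printing Implicit Defensive.

Definition natset := nat -> Prop.

Definition nsetU (A B : natset) : natset := fun x => A x \/ B x.
Definition nsetI (A B : natset) : natset := fun x => A x /\ B x.
Definition nsetC (A : natset) : natset := fun x => ~ A x.
Definition nsetPlus (A B : natset) : natset :=
  fun x => exists a b, A a /\ B b /\ x = a + b.
Definition nsetTimes (A B : natset) : natset :=
  fun x => exists a b, A a /\ B b /\ x = a * b.
Definition nsetDiv (A B : natset) : natset :=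
  fun c => exists a b, A a /\ B b /\ b <> 0 /\ a = c * b.

Inductive oper := OUnion | OInter | OCompl | OPlus | OTimes | ODiv.

Inductive label := LInput of nat | LCompl | LBin of oper.

Record gate := Gate { gname : nat; glabel : label; gpreds : seq nat }.

(** A circuit: its gates listed in reverse topological order (every gate
    appears before all of its predecessors), and the output gate. *)
Record circuit := Circuit { gates : seq gate; gout : nat }.

Definition apply_bin (o : oper) (A B : natset) : natset :=
  match o with
  | OUnion => nsetU A B
  | OInter => nsetI A B
  | OPlus => nsetPlus A B
  | OTimes => nsetTimes A B
  | ODiv => nsetDiv A B
  | OCompl => fun _ => False (* never used in a well-formed circuit *)
  end.

(** Value of a gate given the values of (earlier evaluated) gates.
    For binary gates the predecessors are g1 <= g2 (by gate name). *)
Definition gate_val (e : nat -> natset) (g : gate) : natset :=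
  match glabel g with
  | LInput k => fun z => z = k
  | LCompl => nsetC (e (head 0 (gpreds g)))
  | LBin o =>
      let p := nth 0 (gpreds g) 0 in
      let q := nth 0 (gpreds g) 1 in
      apply_bin o (e (minn p q)) (e (maxn p q))
  end.

Fixpoint gate_env (gs : seq gate) : nat -> natset :=
  match gs with
  | [::] => fun _ _ => False
  | g :: rest =>
      let e := gate_env rest in
      fun x => if x == gname g then gate_val e g else e x
  end.

Definition I (C : circuit) : natset := gate_env (gates C) (gout C).

Definition label_ok (O : oper -> Prop) (g : gate) : Prop :=
  match glabel g with
  | LInput _ => gpreds g = [::]
  | LCompl => O OCompl /\ size (gpreds g) = 1
  | LBin o => O o /\ o <> OCompl /\ size (gpreds g) = 2
  end.

(** Well-formed list: distinct names, labels admissible, and predecessors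
    of each gate are gates listed later (acyclicity). *)
Fixpoint wf_gates (O : oper -> Prop) (gs : seq gate) : Prop :=
  match gs with
  | [::] => True
  | g :: rest =>
      gname g \notin map gname rest /\
      label_ok O g /\
      (forall p, p \in gpreds g -> p \in map gname rest) /\
      wf_gates O rest
  end.

Definition is_O_circuit (O : oper -> Prop) (C : circuit) : Prop :=
  wf_gates O (gates C) /\ gout C \in map gname (gates C).

(** Encoding length |C|: numbers in binary (bit length, 0 has length 1),
    an operation label takes 3 bits. *)
Definition blen (n : nat) : nat := (trunc_log 2 n).+1.

Definition label_len (l : label) : nat :=
  match l with
  | LInput k => blen k
  | _ => 3
  end.

Definition gate_len (g : gate) : nat :=
  blen (gname g) + label_len (glabel g) + \sum_(p <- gpreds g) blen p.

Definition csize (C : circuit) : nat := \sum_(g <- gates C) gate_len g.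

(* Main.v *)
Require Import Defs.
From mathcomp Require Import all_boot.
From mathcomp Require Import zify.
From Stdlib Require Import Classical.

Definition evc (A : natset) (n : nat) : Prop :=
  (forall z, n <= z -> A z) \/ (forall z, n <= z -> ~ A z).

Lemma evc_mono A n m : evc A n -> n <= m -> evc A m.
Proof.
move=> [H|H] Hnm; [left|right] => z Hz; apply: H; lia.
Qed.

Lemma evc_compl A n : evc A n -> evc (nsetC A) n.
Proof. rewrite /nsetC => -[H|H]; [right|left] => z Hz; auto. Qed.

Lemma evc_union A B n : evc A n -> evc B n -> evc (nsetU A B) n.
Proof.
rewrite /nsetU => -[H|H] [H'|H'].
- left => z Hz; auto.
- left => z Hz; auto.
- left => z Hz; auto.
- right => z Hz [K|K]; [exact: (H z Hz) | exact: (H' z Hz)].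
Qed.

Lemma evc_inter A B n : evc A n -> evc B n -> evc (nsetI A B) n.
Proof.
rewrite /nsetI => -[H|H] [H'|H'].
- left => z Hz; auto.
- right => z Hz [_ K]; exact: (H' z Hz).
- right => z Hz [K _]; exact: (H z Hz).
- right => z Hz [K _]; exact: (H z Hz).
Qed.

Lemma small_elt B n : evc B n -> forall b, B b -> exists b', B b' /\ b' <= n.
Proof.
move=> [H|H] b Bb.
- exists n; split; auto.
- exists b; split => //; case: (leqP b n) => // Hl.
  exfalso; apply: (H b) => //; lia.
Qed.

Lemma evc_plus_aux A B nA nB :
  (forall z, nA <= z -> A z) -> evc B nB -> (exists b, B b) ->
  forall z, nA + nB <= z -> nsetPlus A B z.
Proof.
move=> HA HB [b Bb] z Hz.
have [b' [Bb' Hb']] := @small_elt B nB HB b Bb.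
exists (z - b'), b'; split; [apply: HA; lia | split => //; lia].
Qed.

Lemma evc_plus A B nA nB : evc A nA -> evc B nB -> evc (nsetPlus A B) (nA + nB).
Proof.
move=> HA HB.
case: (classic (exists b, B b)) => [Bne|Be]; last first.
  by right => z _ [a [b [_ [Bb _]]]]; apply: Be; exists b.
case: (classic (exists a, A a)) => [Ane|Ae]; last first.
  by right => z _ [a [b [Aa _]]]; apply: Ae; exists a.
case: (HA) => [HA'|HA'].
  by left; apply: evc_plus_aux.
case: (HB) => [HB'|HB'].
  left => z Hz.
  have [z' Hz'] : exists z', nsetPlus B A z' /\ z' = z.
    exists z; split => //; apply: (@evc_plus_aux B A nB nA HB' HA Ane); lia.
  case: Hz' => [[b [a [Bb [Aa E]]]] Ez]; exists a, b; repeat split => //; lia.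
right => z Hz [a [b [Aa [Bb E]]]].
have Ha : a < nA by case: (leqP nA a) => // Hl; exfalso; exact: (HA' a Hl).
have Hb : b < nB by case: (leqP nB b) => // Hl; exfalso; exact: (HB' b Hl).
lia.
Qed.

Lemma evc_div A B nA : evc A nA -> evc (nsetDiv A B) nA.
Proof.
move=> HA.
case: (classic (exists b, B b /\ b <> 0)) => [[b [Bb b0]]|Bn]; last first.
  by right => z _ [a [b [_ [Bb [b0 _]]]]]; apply: Bn; exists b.
case: HA => [HA|HA].
- left => c Hc; exists (c * b), b; repeat split => //; apply: HA.
  rewrite -[c]muln1 -mulnA mul1n; apply: leq_trans Hc _; apply: leq_pmulr; lia.
- right => c Hc [a [b' [Aa [Bb' [b'0 E]]]]]; apply: (HA a) => //.
  rewrite E; apply: leq_trans Hc _; apply: leq_pmulr; lia.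
Qed.

Definition csz (gs : seq gate) := \sum_(g <- gs) gate_len g.

Lemma blen_lt k : k < 2 ^ blen k.
Proof. by apply: trunc_log_ltn. Qed.

Lemma env_bound O gs : ~ O OTimes -> wf_gates O gs ->
  forall x, evc (gate_env gs x) (2 ^ csz gs).
Proof.
move=> NT; elim: gs => [|g rest IH] /=.
  move=> _ x; rewrite /evc; right => z _ [].
move=> [_ [Lok [_ Wf]]] x.
have IHr := IH Wf.
have Hcs : csz (g :: rest) = gate_len g + csz rest by rewrite /csz big_cons.
have Hgl : 1 <= gate_len g by rewrite /gate_len /blen; lia.
have Hdbl : 2 ^ csz rest + 2 ^ csz rest <= 2 ^ csz (g :: rest).
  rewrite Hcs addnn -mul2n -expnS; apply: leq_pexp2l => //; lia.
have Hmono : forall y, evc (gate_env rest y) (2 ^ csz (g :: rest)).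
  move=> y; apply: evc_mono (IHr y) _; lia.
case: (x == gname g) => //.
rewrite /gate_val; move: Lok; rewrite /label_ok.
case Eg: (glabel g) => [k|| o] Lok.
- right => z Hz E; subst z.
  have := blen_lt k.
  have : 2 ^ blen k <= 2 ^ csz (g :: rest).
    apply: leq_pexp2l => //; rewrite Hcs /gate_len Eg /=; lia.
  lia.
- exact: evc_compl (Hmono _).
- case: Lok => Oo [Oc _].
  clear Eg; case: o Oo Oc => Oo Oc /=.
  + exact: evc_union (Hmono _) (Hmono _).
  + exact: evc_inter (Hmono _) (Hmono _).
  + by [].
    apply: evc_mono; first exact: (@evc_plus _ _ _ _ (IHr _) (IHr _)). by [].
  + by exfalso; apply: NT.
  + exact: evc_div (Hmono _).
Qed.

Theorem lemma1 (O : oper -> Prop) (C : circuit) :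
  (exists o, O o) -> ~ O OTimes -> is_O_circuit O C ->
  exists n, n <= 2 ^ csize C + 1 /\
    forall z, n <= z -> (I C z <-> I C n).
Proof.
move=> _ NT [Wf _].
exists (2 ^ csize C); split; first by lia.
have := @env_bound O _ NT Wf (gout C); rewrite /I.
have -> : csz (gates C) = csize C by [].
move=> [H|H] z Hz; split => K.
- exact: H.
- exact: H.
- by exfalso; apply: (H z Hz).
- by exfalso; apply: (H (2 ^ csize C)).
Qed.
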